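(* Let $n\ge 2$, $q>0$, and let $A\in M_n(\mathbb{C})$ satisfy $\operatorname{tr}A=0$ and $\operatorname{rank}A=1$. Then for all $B\in M_n(\mathbb{C})$, $$\|AB-qBA\|_F^2\le (1+q^2)\,\|A\|_F^2\,\|B\|_F^2 .$$
   Context: $\|X\|_F=\sqrt{\operatorname{tr}(XX^\dagger)}$ denotes the Frobenius norm. *)

(* Defs.v *)
From HB Require Import structures.
From mathcomp Require Import all_boot all_order all_algebra.
From mathcomp Require Import complex.
Set Implicit Arguments. Unset Strict Implicit. Unset Printing Implicit Defensive.
Import Order.TTheory GRing.Theory Num.Theory.
Local Open Scope ring_scope.

Definition adjmx (C : numClosedFieldType) (m n : nat) (X : 'M[C]_(m, n)) : 'M[C]_(n, m) :=
  (map_mx Num.conj X)^T.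

Definition frob (C : numClosedFieldType) (n : nat) (X : 'M[C]_n) : C :=
  sqrtC (\tr (X *m adjmx X)).

(* Main.v *)
Require Import Defs.
From HB Require Import structures.
From mathcomp Require Import all_boot all_order all_algebra.
From mathcomp Require Import complex ring.
Import Order.TTheory GRing.Theory Num.Theory.
Local Open Scope ring_scope.
Set Implicit Arguments. Unset Strict Implicit.

Section Tool.
Variable C : numClosedFieldType.

Lemma adjmxK m n (X : 'M[C]_(m,n)) : adjmx (adjmx X) = X.
Proof. by apply/matrixP => i j; rewrite !mxE; exact: conjCK. Qed.

Lemma adjmxM m n p (X : 'M[C]_(m,n)) (Y : 'M[C]_(n,p)) :
  adjmx (X *m Y) = adjmx Y *m adjmx X.
Proof.
apply/matrixP => i j; rewrite !mxE rmorph_sum; apply: eq_bigr => k _.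
by rewrite !mxE rmorphM mulrC.
Qed.

Lemma adjmxD m n (X Y : 'M[C]_(m,n)) : adjmx (X + Y) = adjmx X + adjmx Y.
Proof. by apply/matrixP => i j; rewrite !mxE rmorphD. Qed.

Lemma adjmxZ m n c (X : 'M[C]_(m,n)) : adjmx (c *: X) = c^* *: adjmx X.
Proof. by apply/matrixP => i j; rewrite !mxE rmorphM. Qed.

Definition ip m n (X Y : 'M[C]_(m,n)) := \tr (X *m adjmx Y).

Lemma ipDl m n (X Y Z : 'M[C]_(m,n)) : ip (X + Y) Z = ip X Z + ip Y Z.
Proof. by rewrite /ip mulmxDl mxtraceD. Qed.
Lemma ipDr m n (X Y Z : 'M[C]_(m,n)) : ip Z (X + Y) = ip Z X + ip Z Y.
Proof. by rewrite /ip adjmxD mulmxDr mxtraceD. Qed.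
Lemma ipZl m n c (X Y : 'M[C]_(m,n)) : ip (c *: X) Y = c * ip X Y.
Proof. by rewrite /ip -scalemxAl mxtraceZ. Qed.
Lemma ipZr m n c (X Y : 'M[C]_(m,n)) : ip X (c *: Y) = c^* * ip X Y.
Proof. by rewrite /ip adjmxZ -scalemxAr mxtraceZ. Qed.

Lemma ip_entries m n (X Y : 'M[C]_(m,n)) :
  ip X Y = \sum_i \sum_j X i j * (Y i j)^*.
Proof.
rewrite /ip /mxtrace; apply: eq_bigr => i _; rewrite mxE; apply: eq_bigr => j _.
by rewrite !mxE.
Qed.

Lemma ipC m n (X Y : 'M[C]_(m,n)) : ip Y X = (ip X Y)^*.
Proof.
rewrite !ip_entries rmorph_sum; apply: eq_bigr => i _; rewrite rmorph_sum.
by apply: eq_bigr => j _; rewrite rmorphM mulrC; congr (_ * _); symmetry; exact: conjCK.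
Qed.

Lemma ip_ge0 m n (X : 'M[C]_(m,n)) : 0 <= ip X X.
Proof.
rewrite ip_entries; apply: sumr_ge0 => i _; apply: sumr_ge0 => j _.
exact: mul_conjC_ge0.
Qed.

Lemma ip_eq0 m n (X : 'M[C]_(m,n)) : ip X X = 0 -> X = 0.
Proof.
rewrite ip_entries => /eqP; rewrite psumr_eq0 => [/allP H|i _]; last first.
  by apply: sumr_ge0 => j _; exact: mul_conjC_ge0.
apply/matrixP => i j; rewrite mxE.
have /implyP/(_ isT) := H i (mem_index_enum _).
rewrite psumr_eq0 => [/allP/(_ j (mem_index_enum _))/implyP/(_ isT)|k _];
  last exact: mul_conjC_ge0.
by rewrite mul_conjC_eq0 => /eqP.
Qed.

Lemma ip_real m n (X : 'M[C]_(m,n)) : (ip X X)^* = ip X X.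
Proof. by rewrite geC0_conj // ip_ge0. Qed.

Lemma ip_mull m n p (M : 'M[C]_(m,n)) (X : 'M[C]_(n,p)) Y :
  ip (M *m X) Y = ip X (adjmx M *m Y).
Proof. by rewrite /ip adjmxM adjmxK -mulmxA mxtrace_mulC mulmxA. Qed.

Lemma ip_mulr m n p (M : 'M[C]_(n,p)) (X : 'M[C]_(m,n)) Y :
  ip (X *m M) Y = ip X (Y *m adjmx M).
Proof. by rewrite /ip adjmxM adjmxK mulmxA. Qed.

Lemma ip_rank1 m n (u v : 'M[C]_(m,1)) (x z : 'M[C]_(1,n)) :
  ip (u *m x) (v *m z) = ip u v * ip x z.
Proof.
rewrite /ip adjmxM mulmxA mxtrace_mulC !mulmxA -(mulmxA _ x).
rewrite [adjmx v *m u]mx11_scalar mul_scalar_mx mxtraceZ.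
by rewrite [\tr (u *m _)]mxtrace_mulC [\tr (adjmx v *m u)]trace_mx11.
Qed.

Lemma ip_adj m n (X Y : 'M[C]_(m,n)) : ip (adjmx X) (adjmx Y) = ip Y X.
Proof. by rewrite /ip adjmxK mxtrace_mulC. Qed.




Lemma cjM (x y : C) : (x * y)^* = x^* * y^*. Proof. exact: rmorphM. Qed.
Lemma cjN (x : C) : (- x)^* = - x^*. Proof. exact: rmorphN. Qed.
Lemma cj0 : (0 : C)^* = 0. Proof. exact: rmorph0. Qed.
Lemma cj1 : (1 : C)^* = 1. Proof. exact: rmorph1. Qed.
Lemma cjD (x y : C) : (x + y)^* = x^* + y^*. Proof. exact: rmorphD. Qed.
Lemma cjK (x : C) : x^*^* = x. Proof. exact: conjCK. Qed.

Lemma bessel m n (X E F : 'M[C]_(m,n)) : ip E F = 0 -> 0 < ip E E -> 0 < ip F F ->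
  0 <= ip E E * ip F F * ip X X - ip F F * (ip X E * (ip X E)^*)
        - ip E E * (ip X F * (ip X F)^*).
Proof.
move=> EF e0 f0.
set e := ip E E; set f := ip F F; set s := ip X E; set t := ip X F.
pose Z := (e*f) *: X + (- (f * s)) *: E + (- (e * t)) *: F.
have HZ : ip Z Z = e * f * (e * f * ip X X - f * (s * s^*) - e * (t * t^*)).
  rewrite /Z !ipDl !ipDr !ipZl !ipZr.
  rewrite [ip E X]ipC [ip F X]ipC [ip F E]ipC EF -/s -/t -/e -/f.
  have he : e^* = e by rewrite /e ip_real.
  have hf : f^* = f by rewrite /f ip_real.
  rewrite !cjN !cjM he hf cj0.
  ring.
have := ip_ge0 Z; rewrite HZ pmulr_rge0 //; exact: mulr_gt0.
Qed.

Lemma cs_left m n (E : 'M[C]_(1,m)) (M : 'M[C]_(m,n)) : 0 < ip E E ->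
  ip (E *m M) (E *m M) <= ip E E * ip M M.
Proof.
move=> e0; set e := ip E E; set z := E *m M.
pose Z := e *: M + (-1) *: (adjmx E *m z).
have EE : E *m adjmx E = e%:M.
  by rewrite [LHS]mx11_scalar /e /ip trace_mx11.
have HZ : ip Z Z = e * (e * ip M M - ip z z).
  rewrite /Z !ipDl !ipDr !ipZl !ipZr.
  rewrite [ip (adjmx E *m z) (adjmx E *m z)]ip_mull adjmxK mulmxA EE mul_scalar_mx ipZr.
  rewrite [ip M (adjmx E *m z)]ipC [ip (adjmx E *m z) M]ip_mull adjmxK -/z.
  have he : e^* = e by rewrite /e ip_real.
  rewrite cjN cj1 he ip_real.
  ring.
have := ip_ge0 Z; rewrite HZ pmulr_rge0 // subr_ge0; done.
Qed.


Lemma ipNl m n (X Y : 'M[C]_(m,n)) : ip (- X) Y = - ip X Y.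
Proof. by rewrite -scaleN1r ipZl mulN1r. Qed.
Lemma ipNr m n (X Y : 'M[C]_(m,n)) : ip X (- Y) = - ip X Y.
Proof. by rewrite -scaleN1r ipZr cjN cj1 mulN1r. Qed.

Lemma ip_pos m n (X : 'M[C]_(m,n)) : X != 0 -> 0 < ip X X.
Proof.
move=> X0; rewrite lt_def ip_ge0 andbT; apply/eqP => /ip_eq0 H.
by rewrite H eqxx in X0.
Qed.

Lemma ip_pos_adj m n (X : 'M[C]_(m,n)) : X != 0 -> 0 < ip (adjmx X) (adjmx X).
Proof.
move=> X0; rewrite ip_adj; exact: ip_pos.
Qed.

Lemma mx11_ip m (x : 'M[C]_(1,m)) (u : 'M[C]_(m,1)) : x *m u = (ip x (adjmx u))%:M.
Proof. by rewrite [LHS]mx11_scalar /ip adjmxK trace_mx11. Qed.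

End Tool.

Lemma final (C : numClosedFieldType) (a b q N X Y s t g : C) :
  0 < a -> 0 < b -> 0 <= q -> Num.conj a = a -> Num.conj b = b -> Num.conj q = q ->
  0 <= b*a*X - a*(s * Num.conj s) - b*(g * Num.conj g) ->
  0 <= a*b*Y - b*(t * Num.conj t) - a*(g * Num.conj g) ->
  a*a*X - a*(g * Num.conj g) <= b*(a*(a*N - Y)) ->
  a*X - q*(Num.conj t * s) - q*(t * Num.conj s) + q*q*(Y*b) <= (1+q^+2)*(a*b)*N.
Proof.
move=> a0 b0 q0 ca cb cq F1 F2 F3.
rewrite -subr_ge0 in F3; rewrite -subr_ge0.
set W := q*a*s + b*t.
have WE : W * Num.conj W = (q*a*s + b*t) * (q*a*Num.conj s + b*Num.conj t).
  by rewrite /W cjD !cjM ca cb cq.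
have key : a*b*((1+q^+2)*(a*b)*N - (a*X - q*(Num.conj t * s) - q*(t * Num.conj s) + q*q*(Y*b)))
  = q^+2*a*(b*a*X - a*(s * Num.conj s) - b*(g * Num.conj g))
    + b*(a*b*Y - b*(t * Num.conj t) - a*(g * Num.conj g))
    + (1+q^+2)*b*(b*(a*(a*N - Y)) - (a*a*X - a*(g * Num.conj g)))
    + W * Num.conj W.
  rewrite WE; ring.
have : 0 <= a*b*((1+q^+2)*(a*b)*N - (a*X - q*(Num.conj t * s) - q*(t * Num.conj s) + q*q*(Y*b))).
  rewrite key; apply: addr_ge0; last exact: mul_conjC_ge0.
  apply: addr_ge0; last first.
    by apply: mulr_ge0 => //; apply: mulr_ge0; [apply: addr_ge0 => //; apply: exprn_ge0|exact: ltW].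
  apply: addr_ge0; last by apply: mulr_ge0 => //; exact: ltW.
  by apply: mulr_ge0 => //; apply: mulr_ge0; [apply: exprn_ge0|exact: ltW].
by rewrite pmulr_rge0 // mulr_gt0.
Qed.

Lemma rank1_factor (F : fieldType) m n (A : 'M[F]_(m.+1, n.+1)) : \rank A = 1%N ->
  exists (u : 'cV[F]_m.+1) (w : 'rV[F]_n.+1), A = u *m w.
Proof.
move=> rA.
exists (col_ebase A *m delta_mx 0 (0 : 'I_1)), (delta_mx (0 : 'I_1) 0 *m row_ebase A).
rewrite -{1}(mulmx_ebase A) rA mulmxA -[in RHS](mulmxA (col_ebase A)) mul_delta_mx.
congr (_ *m _ *m _); apply/matrixP => i j; rewrite !mxE.
case: i j => [[|i] Hi] [[|j] Hj] //=.
by rewrite ltnS andbF.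
Qed.

Unset Implicit Arguments.
Local Open Scope complex_scope.

Theorem mainTheorem8 (R : rcfType) (n : nat) (q : R) (A : 'M[R[i]]_n) :
  (2 <= n)%N -> 0 < q -> \tr A = 0 -> \rank A = 1%N ->
  forall B : 'M[R[i]]_n,
    frob (A *m B - q%:C *: (B *m A)) ^+ 2
      <= (1 + q%:C ^+ 2) * frob A ^+ 2 * frob B ^+ 2.
Proof.
case: n A => [//|n] A _ q0 trA rA B.
have [u [w Auw]] := rank1_factor rA.
have fE m (X : 'M[R[i]]_m) : frob X ^+ 2 = ip X X by rewrite /frob sqrtCK.
rewrite !fE.
set qc := q%:C.
have qc0 : 0 <= qc by have := ltW q0; rewrite -(lecR 0 q); apply.
have cq : Num.conj qc = qc by rewrite geC0_conj.
have trwu : \tr (w *m u) = 0 by rewrite mxtrace_mulC -Auw.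
have A0 : A != 0 by apply/eqP => A0; rewrite A0 mxrank0 in rA.
have u0 : u != 0 by apply/eqP => u0; move/eqP: A0; apply; rewrite Auw u0 mul0mx.
have w0 : w != 0 by apply/eqP => w0; move/eqP: A0; apply; rewrite Auw w0 mulmx0.
have a0 := ip_pos u0; have b0 := ip_pos w0.
set a := ip u u in a0 *; set b := ip w w in b0 *.
have ca : Num.conj a = a by rewrite /a ip_real.
have cb : Num.conj b = b by rewrite /b ip_real.
set x := w *m B; set y := B *m u.
have ABE : A *m B = u *m x by rewrite Auw /x mulmxA.
have BAE : B *m A = y *m w by rewrite Auw /y mulmxA.
rewrite ABE BAE.
set N := ip B B; set X := ip x x; set Y := ip y y.
set s1 := ip x w; set t1 := ip y u; set g := ip x (adjmx u).
have gE : ip y (adjmx w) = g.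
  by rewrite /g /ip !adjmxK mxtrace_mulC /x /y mulmxA.
have o1 : ip w (adjmx u) = 0 by rewrite /ip adjmxK trwu.
have o2 : ip u (adjmx w) = 0 by rewrite /ip adjmxK -Auw.
have F1 := bessel x o1 b0 (ip_pos_adj u0).
have F2 := bessel y o2 a0 (ip_pos_adj w0).
rewrite ip_adj -/a -/g -/s1 -/X in F1.
rewrite ip_adj -/b gE -/t1 -/Y in F2.
pose Cm := a *: B + (-1) *: (y *m adjmx u).
have F3 := cs_left Cm b0.
have CC : ip Cm Cm = a * (a * N - Y).
  rewrite /Cm !ipDl !ipDr !ipZl !ipZr ip_rank1 ip_adj.
  rewrite [ip (y *m _) B]ipC -ip_mulr -/y -/Y -/N ip_real.
  rewrite /a /Y /N !cjN !cj1 !ip_real.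
  ring.
have wC : w *m Cm = a *: x + (- g) *: adjmx u.
  rewrite /Cm mulmxDr -!scalemxAr /y mulmxA -/x mulmxA mx11_ip -/g mul_scalar_mx.
  by rewrite scalerA mulN1r.
have zz : ip (w *m Cm) (w *m Cm) = a * a * X - a * (g * Num.conj g).
  rewrite wC !ipDl !ipDr !ipZl !ipZr -/X -/g [ip (adjmx u) x]ipC -/g ip_adj -/a.
  rewrite cjN ca.
  ring.
rewrite CC zz in F3.
have -> : ip A A = a * b by rewrite Auw ip_rank1.
have -> : ip (u *m x - qc *: (y *m w)) (u *m x - qc *: (y *m w))
    = a*X - qc*(Num.conj t1 * s1) - qc*(t1 * Num.conj s1) + qc*qc*(Y*b).
  rewrite !ipDl !ipDr !ipNl !ipNr !ipZl !ipZr !ip_rank1.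
  rewrite [ip u y]ipC [ip w x]ipC.
  rewrite /a /b /X /Y /s1 /t1 cq.
  ring.
exact: final a0 b0 qc0 ca cb cq F1 F2 F3.
Qed.
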